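(* Let $n\ge 1$, let $w_n\ge w_{n-1}\ge\dots\ge w_1>0$ be real weights and let $B\in\{1,\dots,n\}$. Consider minimising the fitness function \[ f(x)=\sum_{i=1}^n w_i x_i+\max\{0,\,B-b(x)\}\cdot(n w_n+1),\qquad b(x)=\sum_{i=1}^n x_i, \] over $x\in\{0,1\}^n$ with either RLS or the (1+1) EA (both defined in the context). Starting with an arbitrary initial search point, the expected number of iterations until the algorithm's current search point is feasible (i.e. satisfies $b(x)\ge B$) is $O\!\left(n\log\frac{n}{n-B}\right)$, where the constant hidden in the $O$-notation does not depend on $n$, the weights, or $B$.
   Context: Problem: minimise $f_{\mathrm{obj}}(x)=\sum_{i=1}^n w_ix_i$ over $x=x_n\cdots x_1\in\{0,1\}^n$ subject to the uniform constraint $x_1+\dots+x_n\ge B$; a search point is feasible if it satisfies the constraint. The algorithms use the penalised fitness $f$ given in the claim. (1+1) EA: maintain a current search point $x_t$ ($x_0$ the initial point); in each iteration create $x'$ by flipping each bit of $x_t$ independently with probability $1/n$; set $x_{t+1}=x'$ if $f(x')\le f(x_t)$, otherwise $x_{t+1}=x_t$. RLS: maintain $x_t$; in each iteration choose $b\in\{1,2\}$ uniformly at random, create $x'$ by flipping $b$ distinct bits of $x_t$ chosen uniformly at random; set $x_{t+1}=x'$ if $f(x')\le f(x_t)$, otherwise $x_{t+1}=x_t$. *)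

(* Defs.v *)
From HB Require Import structures.
From mathcomp Require Import all_boot all_order all_algebra.
From mathcomp Require Import reals exp.
Set Implicit Arguments. Unset Strict Implicit. Unset Printing Implicit Defensive.
Import Order.TTheory GRing.Theory Num.Theory.
Local Open Scope ring_scope.

Inductive algo := EA | RLS.

(* Search points x = x_n ... x_1 in {0,1}^n; bit x_i is [x (i-1)]. *)
Definition bitstr (n : nat) := {ffun 'I_n -> bool}.

Definition ones (n : nat) (x : bitstr n) : nat := (\sum_(i < n) (x i : nat))%N.

Definition feasible (n B : nat) (x : bitstr n) : bool := (B <= ones x)%N.

Section Model.
Variable R : realType.

(* Weights w_1..w_n are given as [w 0 .. w (n-1)]; so w_n = w n.-1.
   max{0, B - b(x)} is the truncated natural subtraction (B - b(x))%N. *)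
Definition fitness (n : nat) (w : nat -> R) (B : nat) (x : bitstr n) : R :=
  \sum_(i < n) w i * (x i : nat)%:R
  + (maxn 0 (B - ones x))%:R * (n%:R * w n.-1 + 1).

Definition hamming (n : nat) (x y : bitstr n) : nat := #|[set i | x i != y i]|.

Definition mut_prob (a : algo) (n : nat) (x y : bitstr n) : R :=
  match a with
  | EA => \prod_(i < n) (if x i == y i then 1 - n%:R^-1 else n%:R^-1)
  | RLS => 2^-1 * ((hamming x y == 1%N)%:R / n%:R)
         + 2^-1 * ((hamming x y == 2%N)%:R / 'C(n, 2)%:R)
  end.

Definition step_prob (a : algo) (n : nat) (w : nat -> R) (B : nat)
  (x z : bitstr n) : R :=
  \sum_(y : bitstr n) mut_prob a x y *
     ((if fitness w B y <= fitness w B x then y else x) == z)%:R.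

(* surv a w B x0 t z = Pr[ x_0, ..., x_t all infeasible and x_t = z ]. *)
Fixpoint surv (a : algo) (n : nat) (w : nat -> R) (B : nat) (x0 : bitstr n)
  (t : nat) : {ffun bitstr n -> R} :=
  match t with
  | 0 => [ffun z => ((z == x0) && ~~ feasible B z)%:R]
  | t'.+1 => [ffun z => (~~ feasible B z)%:R *
                 \sum_(x : bitstr n) surv a w B x0 t' x * step_prob a w B x z]
  end.

(* Pr[T > t], where T = first iteration t with x_t feasible. *)
Definition surv_prob (a : algo) (n : nat) (w : nat -> R) (B : nat)
  (x0 : bitstr n) (t : nat) : R := \sum_(z : bitstr n) surv a w B x0 t z.

(* Partial sums of E[T] = sum_{t >= 0} Pr[T > t]; E[T] <= c iff all
   partial sums are <= c. *)
Definition exp_hit_partial (a : algo) (n : nat) (w : nat -> R) (B : nat)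
  (x0 : bitstr n) (N : nat) : R := \sum_(t < N) surv_prob a w B x0 t.

End Model.

(* Main.v *)
Require Import Defs.
From HB Require Import structures.
From mathcomp Require Import all_boot all_order all_algebra.
From mathcomp Require Import reals exp sequences.
From mathcomp Require Import ring lra zify.
Import Order.TTheory GRing.Theory Num.Theory.
Local Open Scope ring_scope.

Section P.
Variable R : realType.
Variable n : nat.
Implicit Types x y : bitstr n.

Definition flip x (i : 'I_n) : bitstr n := [ffun j => if j == i then ~~ x j else x j].

Lemma sum_bool_card (T : finType) (P : pred T) : (\sum_(i : T) (P i : nat))%N = #|P|.
Proof. rewrite -sum1_card [RHS]big_mkcond; apply: eq_bigr => i _; rewrite unfold_in; by case: (P i). Qed.

Lemma ones_card x : ones x = #|[set i | x i]|.
Proof.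
rewrite /ones -sum1_card [RHS]big_mkcond /=; apply: eq_bigr => i _; rewrite inE; by case: (x i).
Qed.
Lemma card_zeros x : #|[set i | ~~ x i]| = (n - ones x)%N.
Proof.
rewrite ones_card (_ : [set i | ~~ x i] = ~: [set i | x i]); last by apply/setP=> i; rewrite !inE.
have := cardsC [set i | x i]; rewrite card_ord; lia.
Qed.

Lemma ones_le x : (ones x <= n)%N.
Proof. by rewrite ones_card -[X in (_ <= X)%N](card_ord n) max_card. Qed.

Lemma ones_flip x i : ~~ x i -> ones (flip x i) = (ones x).+1.
Proof.
move=> xi; rewrite /ones (bigD1 i) //= [in RHS](bigD1 i) //= ffunE eqxx (negbTE xi) /=.
rewrite add0n add1n; congr _.+1; apply: eq_bigr => j /negbTE ji; by rewrite ffunE ji.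
Qed.

Lemma flip_inj x : injective (flip x).
Proof.
move=> i j /ffunP /(_ i); rewrite !ffunE eqxx; case: (i =P j) => // _; by case: (x i).
Qed.

Lemma hamming_flip x i : hamming x (flip x i) = 1%N.
Proof.
rewrite /hamming (_ : [set j | x j != flip x i j] = [set i]) ?cards1 //.
apply/setP => j; rewrite !inE ffunE; case: (j == i); by case: (x j).
Qed.

Lemma count_ham x k : \sum_(y : bitstr n) ((hamming x y == k)%:R : R) = ('C(n, k))%:R.
Proof.
pose E (S : {set 'I_n}) : bitstr n := [ffun i => x i (+) (i \in S)].
pose D (y : bitstr n) : {set 'I_n} := [set i | x i != y i].
have DE S : D (E S) = S.
  by apply/setP => i; rewrite inE ffunE; case: (x i); case: (i \in S).
have ED y : E (D y) = y.
  by apply/ffunP => i; rewrite ffunE inE; case: (x i); case: (y i).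
rewrite (reindex E); last by exists D => [S _|y _]; [apply: DE | apply: ED].
transitivity (\sum_(S : {set 'I_n}) ((#|S| == k)%:R : R)).
  apply: eq_bigr => S _; by rewrite /hamming -/(D (E S)) DE.
rewrite -natr_sum; congr (_ %:R).
rewrite (sum_bool_card _ (fun S : {set 'I_n} => #|S| == k)).
have := card_draws 'I_n k; rewrite card_ord => <-; apply: eq_card => S; by rewrite inE.
Qed.

Hypothesis n2 : (2 <= n)%N.

Lemma n_gt0 : (0 < n%:R :> R).
Proof. rewrite ltr0n; lia. Qed.

Lemma invn_le1 : (n%:R^-1 <= 1 :> R).
Proof. rewrite invf_le1 ?n_gt0 // ler1n; lia. Qed.

Lemma mut_ge0 a x y : 0 <= mut_prob R a x y :> R.
Proof.
case: a => /=.
  apply: prodr_ge0 => i _; case: ifP => _; last by rewrite invr_ge0 ler0n.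
  by rewrite subr_ge0 invn_le1.
by apply: addr_ge0; apply: mulr_ge0; rewrite ?invr_ge0 ?ler0n // divr_ge0 // ler0n.
Qed.

Lemma mut_sum a x : \sum_y mut_prob R a x y = 1 :> R.
Proof.
case: a => /=.
  rewrite -(bigA_distr_bigA (fun i b => if x i == b then 1 - n%:R^-1 else n%:R^-1 : R)).
  apply: big1 => i _; rewrite big_bool; case: (x i) => /=; ring.
rewrite big_split /= -!mulr_sumr -!mulr_suml !count_ham bin1.
have C2 : ('C(n, 2)%:R : R) != 0 by rewrite pnatr_eq0 -lt0n bin_gt0.
have N0 : (n%:R : R) != 0 by rewrite gt_eqF // n_gt0.
rewrite !divff // !mulr1; lra.
Qed.

Definition q : R := (2 * expR 1)^-1.

Lemma e_ge1 : 1 <= expR 1 :> R.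
Proof. by rewrite -[X in X <= _]expR0 ler_expR ler01. Qed.

Lemma EA_factor : 1 <= (1 - n%:R^-1) ^+ n.-1 * expR 1 :> R.
Proof.
set m := n.-1.
have nE : n = m.+1 by rewrite /m; lia.
have m0 : (m%:R : R) != 0 by rewrite pnatr_eq0 /m; lia.
have -> : expR 1 = expR (m%:R^-1) ^+ m :> R by rewrite -expRM_natl mulfV.
rewrite -exprMn exprn_ege1 //.
apply: (@le_trans _ _ ((1 - n%:R^-1) * (1 + m%:R^-1))).
  rewrite [X in _ <= X](_ : _ = 1) //; rewrite nE -addn1 natrD; field.
  apply/andP; split => //; rewrite gt_eqF //; apply: ltr_wpDl; rewrite ?ler0n ?ltr01 //.
by apply: ler_wpM2l; [rewrite subr_ge0 invn_le1 | apply: expR_ge1Dx].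
Qed.

Lemma mut_flip a x i : q / n%:R <= mut_prob R a x (flip x i).
Proof.
have e0 : 0 < expR 1 :> R by apply: expR_gt0.
have n0 := n_gt0.
case: a => /=.
  rewrite (bigD1 i) //= ffunE eqxx (_ : (x i == ~~ x i) = false); last by case: (x i).
  rewrite (eq_bigr (fun _ => 1 - n%:R^-1)); last first.
    by move=> j ji; rewrite ffunE (negbTE ji) eqxx.
  rewrite prodr_const cardC1 card_ord /q mulrC. 
  apply: ler_wpM2l; first by rewrite invr_ge0 ltW.
  have ei : 0 <= (expR 1 : R)^-1 by rewrite invr_ge0 ltW.
  apply: (@le_trans _ _ ((expR 1)^-1)); first by rewrite invfM; lra.
  by rewrite -div1r ler_pdivrMr // EA_factor.
rewrite hamming_flip /= mul0r mulr0 addr0 mul1r /q invfM.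
have u1 : (expR 1 : R)^-1 <= 1 by rewrite invf_le1 // e_ge1.
have H : 0 <= (1 - (expR 1 : R)^-1) * n%:R^-1 by rewrite mulr_ge0 ?subr_ge0 // invr_ge0 ltW.
nra.
Qed.

Variable w : nat -> R.
Variable B : nat.
Hypothesis Hw : forall i j : nat, (i <= j)%N -> (j < n)%N -> w i <= w j.
Hypothesis Hpos : forall i : nat, (i < n)%N -> 0 < w i.

Definition Lin y := \sum_(i < n) w i * (y i : nat)%:R.
Definition W := n%:R * w n.-1.

Lemma W_ge0 : 0 <= W.
Proof. rewrite /W mulr_ge0 ?ler0n // ltW // Hpos //; lia. Qed.

Lemma Lin_ge0 y : 0 <= Lin y.
Proof. apply: sumr_ge0 => i _; rewrite mulr_ge0 ?ler0n // ltW // Hpos //. Qed.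

Lemma Lin_le y : Lin y <= W.
Proof.
rewrite /W /Lin mulr_natl -[n in _ *+ n](card_ord n) -sumr_const; apply: ler_sum => i _.
case: (y i) => /=; rewrite ?mulr1 ?mulr0.
  apply: Hw; have := ltn_ord i; lia.
by rewrite ltW // Hpos //; lia.
Qed.

Lemma fitE y : fitness w B y = Lin y + (B - ones y)%:R * (W + 1).
Proof. by rewrite /fitness max0n. Qed.

Lemma fit_lt x y : (ones x < B)%N -> (ones x < ones y)%N -> fitness w B y < fitness w B x.
Proof.
move=> xB xy; rewrite !fitE.
have := Lin_ge0 x; have := Lin_le y; have := W_ge0 => *.
have Hr : ((B - ones y + 1)%N%:R <= (B - ones x)%:R :> R) by rewrite ler_nat; lia.
rewrite natrD in Hr.
have := ler_wpM2r (_ : 0 <= W + 1) Hr.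
move=> /(_ ltac:(lra)) H; nra.
Qed.

Lemma fit_gt x y : (ones x < B)%N -> (ones y < ones x)%N -> fitness w B x < fitness w B y.
Proof.
move=> xB xy; rewrite !fitE.
have := Lin_ge0 y; have := Lin_le x; have := W_ge0 => *.
have Hr : ((B - ones x + 1)%N%:R <= (B - ones y)%:R :> R) by rewrite ler_nat; lia.
rewrite natrD in Hr.
have := ler_wpM2r (_ : 0 <= W + 1) Hr.
move=> /(_ ltac:(lra)) H; nra.
Qed.

Hypothesis HB1 : (1 <= B)%N.
Hypothesis HBn : (B < n)%N.

Definition lo := (n - B)%N.
Definition c : R := n%:R * (2 * expR 1).
Definition S m : R := \sum_(lo <= i < m) (i.+1%:R)^-1.
Definition G k : R := c * S (n - k).

Lemma c_ge0 : 0 <= c.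
Proof. by rewrite /c mulr_ge0 ?ler0n // mulr_ge0 ?ler0n // ltW // expR_gt0. Qed.

Lemma S_ge0 m : 0 <= S m.
Proof. by apply: sumr_ge0 => i _; rewrite invr_ge0 ler0n. Qed.

Lemma S_mono m m' : (m <= m')%N -> S m <= S m'.
Proof.
move=> mm; case: (leqP lo m) => lm.
  by rewrite /S (big_cat_nat lm mm) /= lerDl; apply: sumr_ge0 => i _; rewrite invr_ge0 ler0n.
by rewrite /S big_geq ?S_ge0 // ltnW.
Qed.

Lemma G_ge0 k : 0 <= G k.
Proof. by rewrite /G mulr_ge0 ?c_ge0 ?S_ge0. Qed.

Lemma G_mono k k' : (k <= k')%N -> G k' <= G k.
Proof. move=> kk; rewrite /G ler_wpM2l ?c_ge0 // S_mono //; lia. Qed.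

Lemma G_step k : (k < B)%N -> G k = G k.+1 + c / (n - k)%:R.
Proof.
move=> kB; rewrite /G /S (_ : (n - k)%N = (n - k.+1).+1); last by lia.
rewrite big_nat_recr /=; last by rewrite /lo; lia.
rewrite mulrDr (_ : (n - k.+1).+1 = (n - k))%N //; lia.
Qed.

Lemma G_zero k : (B <= k)%N -> G k = 0.
Proof. by move=> Bk; rewrite /G /S big_geq ?mulr0 // /lo; lia. Qed.


Lemma drift a x : (ones x < B)%N ->
  \sum_z step_prob a w B x z * G (ones z) <= G (ones x) - 1.
Proof.
move=> xB; set k := ones x.
pose sel y := if fitness w B y <= fitness w B x then y else x.
have E : \sum_z step_prob a w B x z * G (ones z) =
         \sum_y mut_prob R a x y * G (ones (sel y)).
  rewrite /step_prob.
  under eq_bigr => z _ do rewrite mulr_suml.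
  rewrite exchange_big /=; apply: eq_bigr => y _.
  rewrite (bigD1 (sel y)) //= eqxx mulr1 big1 ?addr0 // => z zs.
  by rewrite eq_sym (negbTE zs) mulr0 mul0r.
set d := c / (n - k)%:R.
have P y : G (ones (sel y)) <= G k - d * (k < ones y)%:R.
  rewrite /sel; case: (ltnP k (ones y)) => ky /=.
    rewrite ifT ?mulr1; last by apply: ltW; apply: fit_lt.
    by rewrite [G k]G_step // addrK G_mono.
  rewrite mulr0 subr0; case: ifP => Hf //.
  case: (ltnP (ones y) k) => yk; last by apply: G_mono.
  by have := fit_gt x y xB yk; rewrite ltNge Hf.
rewrite E; apply: (@le_trans _ _ (\sum_y mut_prob R a x y * (G k - d * (k < ones y)%:R))).
  by apply: ler_sum => y _; apply: ler_wpM2l; [apply: mut_ge0 | apply: P].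
under eq_bigr => y _ do rewrite mulrBr.
rewrite sumrB -mulr_suml mut_sum mul1r lerD2l lerN2.
under eq_bigr => y _ do rewrite mulrCA.
rewrite -mulr_sumr.
set Z := [set i | ~~ x i].
have T : (n - k)%:R * (q / n%:R) <= \sum_y mut_prob R a x y * (k < ones y)%:R.
  apply: (@le_trans _ _ (\sum_(y in flip x @: Z) mut_prob R a x y * (k < ones y)%:R)).
    rewrite big_imset /=; last by move=> i j _ _; apply: flip_inj.
    rewrite mulr_natl -card_zeros -sumr_const; apply: ler_sum => i; rewrite inE => xi.
    by rewrite ones_flip // ltnSn mulr1 mut_flip.
  rewrite [X in _ <= X](bigID (fun y => y \in flip x @: Z)) /= lerDl.
  by apply: sumr_ge0 => y _; rewrite mulr_ge0 ?ler0n ?mut_ge0.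
have d0 : 0 <= d by rewrite /d divr_ge0 ?c_ge0 ?ler0n.
apply: (@le_trans _ _ (d * ((n - k)%:R * (q / n%:R)))); last by apply: ler_wpM2l.
have nk : ((n - k)%:R : R) != 0 by rewrite pnatr_eq0; lia.
have n0 : (n%:R : R) != 0 by rewrite pnatr_eq0; lia.
have e0 : (expR 1 : R) != 0 by rewrite gt_eqF // expR_gt0.
rewrite /d /c /q [X in _ <= X](_ : _ = 1) //; field.
by rewrite e0 n0 nk.
Qed.

Lemma harm : S n <= ln (n%:R / lo%:R).
Proof.
have lo1 : (1 <= lo)%N by rewrite /lo; lia.
rewrite ln_div ?posrE ?ltr0n; [|lia|lia].
rewrite -(telescope_sumr (fun i => ln (i%:R : R))); last by rewrite /lo; lia.
apply: ler_sum_nat => i /andP [li _].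
have i0 : (0 < i%:R :> R) by rewrite ltr0n; lia.
have i1 : (0 < i.+1%:R :> R) by rewrite ltr0n.
have iv : 0 < (i.+1%:R : R)^-1 < 1.
  by rewrite invr_gt0 i1 /= invf_lt1 // ltr1n; lia.
have := @le_ln1Dx R (- (i.+1%:R)^-1).
rewrite (_ : 1 + - (i.+1%:R : R)^-1 = i%:R / i.+1%:R); last first.
  by rewrite -addn1 natrD; field; rewrite gt_eqF //; lra.
move=> H; rewrite ln_div ?posrE // in H.
case/andP: iv => iv1 iv2.
have h1 : -1 < - (i.+1%:R : R)^-1 by rewrite ltrN2.
by rewrite -lerN2 opprB; apply: H.
Qed.

Lemma step_ge0 a x z : 0 <= step_prob a w B x z.
Proof. by apply: sumr_ge0 => y _; rewrite mulr_ge0 ?ler0n ?mut_ge0. Qed.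

Variable a : algo.
Variable x0 : bitstr n.

Lemma surv_ge0 t z : 0 <= surv a w B x0 t z.
Proof.
elim: t z => [|t IH] z /=; rewrite ffunE ?ler0n //.
rewrite mulr_ge0 ?ler0n //; apply: sumr_ge0 => x _; rewrite mulr_ge0 ?IH ?step_ge0 //.
Qed.

Lemma surv_feas t z : feasible B z -> surv a w B x0 t z = 0.
Proof. by case: t => [|t] /= fz; rewrite ffunE fz ?andbF ?mul0r. Qed.

Definition Phi t := \sum_z surv a w B x0 t z * G (ones z).

Lemma Phi_ge0 t : 0 <= Phi t.
Proof. by apply: sumr_ge0 => z _; rewrite mulr_ge0 ?surv_ge0 ?G_ge0. Qed.

Lemma Phi_step t : Phi t.+1 + surv_prob a w B x0 t <= Phi t.
Proof.
suff : Phi t.+1 <= Phi t - surv_prob a w B x0 t by lra.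
have -> : Phi t.+1 = \sum_z (\sum_x surv a w B x0 t x * step_prob a w B x z) * G (ones z).
  apply: eq_bigr => z _ /=; rewrite ffunE.
  case fz: (feasible B z) => /=; last by rewrite mul1r.
  by rewrite G_zero ?mulr0 //.
under eq_bigr => z _ do rewrite mulr_suml.
rewrite exchange_big /=.
rewrite /Phi /surv_prob -sumrB; apply: ler_sum => x _.
under eq_bigr => z _ do rewrite -mulrA.
rewrite -mulr_sumr -[X in _ <= _ - X]mulr1 -mulrBr.
case fx: (feasible B x); first by rewrite surv_feas // !mul0r.
apply: ler_wpM2l; first exact: surv_ge0.
apply: drift; by move: fx; rewrite /feasible ltnNge => ->.
Qed.

Lemma partial_bound N : exp_hit_partial a w B x0 N + Phi N <= Phi 0.
Proof.
elim: N => [|N IH]; first by rewrite /exp_hit_partial big_ord0 add0r.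
rewrite /exp_hit_partial big_ord_recr /=.
have := Phi_step N; rewrite /exp_hit_partial in IH; lra.
Qed.

Lemma Phi0 : Phi 0 <= G 0.
Proof.
rewrite /Phi (bigD1 x0) //= ffunE eqxx /= big1 ?addr0; last first.
  by move=> z zx; rewrite ffunE (negbTE zx) /= mul0r.
case: (feasible B x0) => /=; rewrite ?mul0r ?G_ge0 // mul1r G_mono //.
Qed.

Lemma final N : exp_hit_partial a w B x0 N <= 2 * expR 1 * n%:R * ln (n%:R / (n - B)%:R).
Proof.
have := partial_bound N; have := Phi_ge0 N; have := Phi0.
have : G 0 <= c * ln (n%:R / lo%:R) by rewrite /G subn0 ler_wpM2l ?c_ge0 ?harm.
rewrite /c /lo [2 * expR 1 * _]mulrC => *; lra.
Qed.

End P.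

Theorem lemma2 (R : realType) :
  exists C : R, 0 < C /\
  forall (n : nat) (w : nat -> R) (B : nat) (a : algo) (x0 : bitstr n),
    (1 <= n)%N ->
    (forall i j : nat, (i <= j)%N -> (j < n)%N -> w i <= w j) ->
    (forall i : nat, (i < n)%N -> 0 < w i) ->
    (1 <= B)%N -> (B < n)%N ->
    forall N : nat,
      exp_hit_partial a w B x0 N <= C * n%:R * ln (n%:R / (n - B)%:R).
Proof.
exists (2 * expR 1); split; first by rewrite mulr_gt0 ?expR_gt0.
move=> n w B a x0 _ Hw Hpos HB1 HBn N.
have n2 : (2 <= n)%N by lia.
exact: (@final R n n2 w B Hw Hpos HB1 HBn a x0 N).
Qed.
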